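(* For every integer $k\ge1$, $2d(\{0,1,\ldots,k-1\})\ge d(\{0,1,\ldots,k\})$, and the inequality is strict for $k>1$.
   Context: For $A,B\subseteq\mathbb{N}=\{0,1,\ldots\}$, $A+B=\{a+b:a\in A,b\in B\}$. For a nonempty finite $C\subseteq\mathbb{N}$, $d(C)$ is the number of sets $B\subseteq\mathbb{N}$ such that $B+D=C$ for some $D\subseteq\mathbb{N}$. *)

(* Defs.v *)
From mathcomp Require Import all_boot all_order.
From mathcomp Require Import boolp classical_sets cardinality.
From mathcomp Require Import finmap.
Set Implicit Arguments. Unset Strict Implicit. Unset Printing Implicit Defensive.
Local Open Scope classical_set_scope.

Definition sumset (A B : set nat) : set nat :=
  [set x | exists a b, A a /\ B b /\ x = (a + b)%N].

Definition summands (C : set nat) : set (set nat) :=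
  [set B | exists D : set nat, sumset B D = C].

(* d(C) = number of such B (finite when C is finite and nonempty, since
   then every such B is a subset of C). *)
Definition dcount (C : set nat) : nat := #|` fset_set (summands C)|%fset.

(* Main.v *)
Require Import Defs.
From mathcomp Require Import all_boot all_order.
From mathcomp Require Import boolp classical_sets cardinality.
From mathcomp Require Import finmap.
From mathcomp Require Import zify.
Set Implicit Arguments. Unset Strict Implicit. Unset Printing Implicit Defensive.
Local Open Scope classical_set_scope.

Definition ismax (B : set nat) m := B m /\ forall x, B x -> (x <= m)%N.
Definition maxB (B : set nat) := xget 0%N (ismax B).

Lemma ismax_uniq B m m' : ismax B m -> ismax B m' -> m = m'.
Proof. move=> [h1 h2] [h3 h4]; have := h2 _ h3; have := h4 _ h1; lia. Qed.

Lemma maxB_eq B m : ismax B m -> maxB B = m.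
Proof. move=> h; apply: xget_unique => // y hy; exact: ismax_uniq hy h. Qed.

Definition good k (B : set nat) := exists m, ismax B m /\ (m <= k)%N /\
  (forall x, (x <= k)%N -> exists b, B b /\ (b <= x)%N /\ (x <= b + (k - m))%N).

Lemma ex_max (B : set nat) k : B 0%N -> (forall x, B x -> (x <= k)%N) ->
  exists m, ismax B m.
Proof.
move=> B0 Bk.
have exP : exists i, (fun i => `[< B i >]) i by exists 0%N; apply/asboolP.
have ubP : forall i, (fun i => `[< B i >]) i -> (i <= k)%N by move=> i /asboolP; apply: Bk.
case: (ex_maxnP exP ubP) => m /asboolP Bm H; exists m; split => // x Bx.
by apply: H; apply/asboolP.
Qed.

Lemma summandsP k B : summands [set n | (n <= k)%N] B <-> good k B.
Proof.
split.
- move=> [D hD].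
  have hin : forall x, (x <= k)%N <-> exists a b, B a /\ D b /\ x = (a + b)%N.
    by move=> x; have := congr1 (fun S => S x) hD; rewrite /sumset /= => <-.
  have [a [b [Ba [Db e]]]] := (hin 0%N).1 (leq0n _).
  have a0 : a = 0%N by lia.
  have b0 : b = 0%N by lia.
  subst a b.
  have Bk : forall x, B x -> (x <= k)%N.
    by move=> x Bx; apply/(hin x).2; exists x, 0%N; rewrite addn0.
  have [m hm] := ex_max Ba Bk.
  exists m; split => //; split; first by apply: Bk; case: hm.
  move=> x /(hin x).1 [a [d [Ba' [Dd ->]]]].
  exists a; split => //.
  have : (m + d <= k)%N by apply/(hin _).2; exists m, d; split => //; case: hm.
  lia.
- move=> [m [[Bm Bmax] [mk cov]]].
  exists [set n | (n <= k - m)%N].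
  apply/seteqP; split => x /=.
  + move=> [a [d [Ba [Dd ->]]]]; move: Dd => /= Dd; have := Bmax _ Ba; lia.
  + move=> /cov [b [Bb [h1 h2]]]; exists b, (x - b)%N; split => //; split => /=; lia.
Qed.

Lemma finite_subsets k : finite_set [set B : set nat | B `<=` [set n | (n <= k)%N]].
Proof.
pose f (S : {set 'I_k.+1}) : set nat := [set n | exists i : 'I_k.+1, i \in S /\ n = val i].
apply: (@sub_finite_set _ _ (f @` [set: {set 'I_k.+1}])); last first.
  by apply: finite_image; apply: finite_finset.
move=> B /= HB; exists (finset (fun i : 'I_k.+1 => `[< B (val i) >])) => //.
apply/seteqP; split => n /=.
- by move=> [i [+ ->]]; rewrite inE => /asboolP.
- move=> Bn; have nk : (n < k.+1)%N by have := HB _ Bn.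
  by exists (Ordinal nk); split => //; rewrite inE; apply/asboolP.
Qed.

Lemma good_sub k B : good k B -> B `<=` [set n | (n <= k)%N].
Proof. by move=> [m [[Bm Bmax] [mk _]]] x /Bmax /= h; lia. Qed.

Lemma finite_V k : finite_set (summands [set n | (n <= k)%N]).
Proof.
apply: sub_finite_set (finite_subsets k) => B /summandsP; exact: good_sub.
Qed.

Definition phi (B : set nat) : set nat := [set x | (B x /\ x <> maxB B) \/ x = (maxB B).-1].
Definition beta (B : set nat) : bool := `[< B (maxB B).-1 /\ (0 < maxB B)%N >].

Lemma good0 k B : good k B -> B 0%N.
Proof.
move=> [m [_ [_ cov]]]; have [b [Bb [h1 _]]] := cov 0%N (leq0n _).
by have -> : 0%N = b by lia.
Qed.

Lemma phi_max B m : ismax B m -> ismax (phi B) m.-1.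
Proof.
move=> hm; have e := maxB_eq hm; case: hm => Bm Bmax.
rewrite /phi e; split; first by right.
move=> x /= [[/Bmax h1 h2]|->] //; lia.
Qed.

Lemma phi_good k B : (1 <= k)%N -> good k B -> good k.-1 (phi B).
Proof.
move=> k1 [m [hm [mk cov]]]; exists m.-1; split; first exact: phi_max.
split; first lia.
have e := maxB_eq hm; case: hm => Bm Bmax.
move=> x xk; have [b [Bb [h1 h2]]] := cov x ltac:(lia).
have [bm|bm] := eqVneq b m.
- exists m.-1; split; first by rewrite /phi e /=; right.
  subst b; lia.
- exists b; split; first by rewrite /phi e /=; left; split => //; apply/eqP.
  have := Bmax _ Bb; move/eqP: bm => bm; lia.
Qed.

Lemma key B1 B2 m x : ismax B1 m -> ismax B2 m -> beta B1 = beta B2 ->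
  phi B1 = phi B2 -> B1 x -> B2 x.
Proof.
move=> h1 h2 hb hp Bx.
have e1 := maxB_eq h1; have e2 := maxB_eq h2.
have [->|xm] := eqVneq x m; first by case: h2.
have [xm1|xm1] := eqVneq x m.-1.
- have m0 : (0 < m)%N by move/eqP: xm; move/eqP: xm1; lia.
  have : beta B1 by rewrite /beta e1; apply: asboolT; split => //; rewrite -xm1.
  rewrite hb /beta e2 => /asboolP [+ _]; by rewrite xm1.
- have : phi B1 x by rewrite /phi e1 /=; left; split => //; apply/eqP.
  rewrite hp /phi e2 /= => -[[]//|/eqP]; by rewrite (negPf xm1).
Qed.

Lemma phi_inj k B1 B2 : good k B1 -> good k B2 -> beta B1 = beta B2 ->
  phi B1 = phi B2 -> B1 = B2.
Proof.
move=> g1 g2 hb hp.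
have B10 := good0 g1; have B20 := good0 g2.
case: g1 => m1 [h1 _]; case: g2 => m2 [h2 _].
have e1 := maxB_eq h1; have e2 := maxB_eq h2.
have em : m1.-1 = m2.-1.
  by apply: (ismax_uniq (B := phi B1)); [apply: phi_max | rewrite hp; apply: phi_max].
have bt : forall B m, B 0%N -> maxB B = m -> m = 1%N -> beta B.
  by move=> B m B0 e em1; rewrite /beta e em1; apply: asboolT.
have bf : forall B, maxB B = 0%N -> beta B = false.
  by move=> B e; rewrite /beta e; apply: asboolF => -[].
have mm : m1 = m2.
  case: m1 em h1 e1 => [|m1]; case: m2 h2 e2 => [|m2] //= h2 e2 em h1 e1; try by rewrite em.
  - subst m2; have := bt _ _ B20 e2 erefl; by rewrite -hb bf.
  - subst m1; have := bt _ _ B10 e1 erefl; by rewrite hb bf.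
rewrite -mm in h2.
apply/funext => x; apply/propext; split; [apply: (key (m := m1)) | apply: (key (m := m1))] => //.
Qed.

Lemma no_pre k B : (2 <= k)%N -> good k B -> beta B = false ->
  phi B <> [set n | (n <= k.-1)%N].
Proof.
move=> k2 [m [hm [mk cov]]] hb hp.
have hW : ismax [set n | (n <= k.-1)%N] k.-1 by split => //=.
have := phi_max hm; rewrite hp => /(ismax_uniq hW) em.
have mk' : m = k by lia.
subst m.
have e := maxB_eq hm.
have nB : ~ B k.-1.
  move=> Bk; move: hb; rewrite /beta e asboolT //; split => //; lia.
have [b [Bb [h1 h2]]] := cov k.-1 ltac:(lia).
have : b = k.-1 by lia.
by move=> eb; apply: nB; rewrite -eb.
Qed.

Lemma good_W k : good k [set n | (n <= k)%N].
Proof.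
exists k; split; first by split => //=.
split => // x xk; exists x; split => //=; lia.
Qed.

Definition FV k := fset_set (summands [set n | (n <= k)%N]).

Lemma inFV k B : B \in FV k <-> good k B.
Proof.
rewrite /FV in_fset_set; last exact: finite_V.
split => [/set_mem h|h]; first exact: (summandsP k B).1.
by apply: mem_set; apply: (summandsP k B).2.
Qed.

Local Open Scope fset_scope.

Lemma step j : (#|` FV j.+1| <= 2 * #|` FV j|)%N /\
  ((1 <= j)%N -> (#|` FV j.+1| < 2 * #|` FV j|)%N).
Proof.
set Ft := [fset B in FV j.+1 | beta B].
set Ff := [fset B in FV j.+1 | ~~ beta B].
have split_card : #|` FV j.+1| = (#|` Ft| + #|` Ff|)%N.
  rewrite -(cardfsID Ft (FV j.+1)); congr (_ + _)%N; congr (#|` _|); apply/fsetP => B;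
    rewrite !inE; by case: (B \in FV j.+1); case: (beta B).
have injt : {in Ft &, injective phi}.
  move=> B1 B2; rewrite !inE => /andP[/inFV g1 b1] /andP[/inFV g2 b2].
  by apply: phi_inj g1 g2 _; rewrite b1 b2.
have injf : {in Ff &, injective phi}.
  move=> B1 B2; rewrite !inE => /andP[/inFV g1 /negPf b1] /andP[/inFV g2 /negPf b2].
  by apply: phi_inj g1 g2 _; rewrite b1 b2.
have ct : #|` phi @` Ft| = #|` Ft| by apply/eqP/card_in_imfsetP.
have cf : #|` phi @` Ff| = #|` Ff| by apply/eqP/card_in_imfsetP.
have subt : phi @` Ft `<=` FV j.
  apply/fsubsetP => _ /imfsetP [B + ->]; rewrite !inE => /andP[/inFV g _].
  by apply/inFV; apply: (phi_good (k := j.+1)).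
have subf : phi @` Ff `<=` FV j.
  apply/fsubsetP => _ /imfsetP [B + ->]; rewrite !inE => /andP[/inFV g _].
  by apply/inFV; apply: (phi_good (k := j.+1)).
have lt := fsubset_leq_card subt; have lf := fsubset_leq_card subf.
split; first by lia.
move=> j1.
pose W : set nat := [set n | (n <= j)%N].
have WV : W \in FV j by apply/inFV; apply: good_W.
have subf' : phi @` Ff `<=` FV j `\ W.
  apply/fsubsetP => _ /imfsetP [B + ->]; rewrite !inE => /andP[/inFV g b].
  apply/andP; split; last by apply/inFV; apply: (phi_good (k := j.+1)).
  apply/eqP => e; apply: (no_pre (k := j.+1) _ g (negPf b) e); lia.
have := fsubset_leq_card subf'; have := cardfsD1 W (FV j); rewrite WV.
lia.
Qed.

Theorem mainTheorem7 (k : nat) (hk : (1 <= k)%N) :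
  (dcount [set n | (n <= k)%N] <= 2 * dcount [set n | (n < k)%N])%N /\
  ((1 < k)%N -> (dcount [set n | (n <= k)%N] < 2 * dcount [set n | (n < k)%N])%N).
Proof.
case: k hk => [//|j] _.
have -> : [set n | (n < j.+1)%N] = [set n | (n <= j)%N].
  by apply/seteqP; split => x /=; rewrite ltnS.
have [h1 h2] := step j.
split; first exact: h1.
by move=> hj; apply: h2; lia.
Qed.
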